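(* Let $d\ge1$, let $i\in[n]$, and let $v_i:\mathbb{R}_{\ge0}^n\to\mathbb{R}_{\ge0}$ be a $d$-SOS function. Let $A$ be a uniformly random subset of $[n]\setminus\{i\}$ (each of the $2^{n-1}$ subsets equally likely) and $B=([n]\setminus\{i\})\setminus A$. Then for every $\mathbf{s}\in\mathbb{R}_{\ge0}^n$, $$\mathbb{E}_A\big[v_i(\mathbf{s}_A,\mathbf{0}_B,s_i)\big]\ge\frac{1}{d+1}\,v_i(\mathbf{s}),$$ where $(\mathbf{s}_A,\mathbf{0}_B,s_i)$ is the vector agreeing with $\mathbf{s}$ on $A\cup\{i\}$ and equal to $0$ on $B$.
   Context: A function $v:\mathbb{R}_{\ge0}^n\to\mathbb{R}_{\ge0}$ is $d$-SOS if for every coordinate $j$, every $s_j\ge0$, every $\delta\ge0$, and every $\mathbf{s}_{-j},\mathbf{s}'_{-j}$ with $\mathbf{s}'_{-j}\le\mathbf{s}_{-j}$ coordinate-wise, $d\cdot\big(v(\mathbf{s}'_{-j},s_j+\delta)-v(\mathbf{s}'_{-j},s_j)\big)\ge v(\mathbf{s}_{-j},s_j+\delta)-v(\mathbf{s}_{-j},s_j)$. SOS means $1$-SOS. *)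

(* Defs.v *)
(* the statement is purely order-algebraic (finite averages),
   so it is stated over an arbitrary real field R (which includes the reals). *)
From HB Require Import structures.
From mathcomp Require Import all_boot all_order all_algebra.
Set Implicit Arguments. Unset Strict Implicit. Unset Printing Implicit Defensive.
Import Order.TTheory GRing.Theory Num.Theory.
Local Open Scope ring_scope.

Definition nonneg_vec (R : realFieldType) (n : nat) (s : 'I_n -> R) : Prop :=
  forall k, 0 <= s k.

Definition upd (R : realFieldType) (n : nat) (s : 'I_n -> R) (j : 'I_n) (x : R)
  : 'I_n -> R := fun k => if k == j then x else s k.

(* d-SOS for v : R_{>=0}^n -> R (only values on the nonnegative orthant matter) *)
Definition dSOS (R : realFieldType) (n : nat) (d : R) (v : ('I_n -> R) -> R) : Prop :=
  forall (j : 'I_n) (s s' : 'I_n -> R) (x delta : R),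
    nonneg_vec s -> nonneg_vec s' ->
    (forall k, k != j -> s' k <= s k) ->
    0 <= x -> 0 <= delta ->
    v (upd s j (x + delta)) - v (upd s j x)
      <= d * (v (upd s' j (x + delta)) - v (upd s' j x)).

Definition restrict_vec (R : realFieldType) (n : nat) (s : 'I_n -> R)
  (A : {set 'I_n}) (i : 'I_n) : 'I_n -> R :=
  fun k => if (k \in A) || (k == i) then s k else 0.

(* Main.v *)
Require Import Defs.
From HB Require Import structures.
From mathcomp Require Import all_boot all_order all_algebra.
From Stdlib Require Import FunctionalExtensionality.
From mathcomp Require Import ring.
Import Order.TTheory GRing.Theory Num.Theory.
Local Open Scope ring_scope.

Section Aux.
Variables (R : realFieldType) (n : nat) (i : 'I_n) (s : 'I_n -> R).
Hypothesis hs : nonneg_vec s.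

Lemma restrict_nn (C : {set 'I_n}) : nonneg_vec (restrict_vec s C i).
Proof. move=> k; rewrite /restrict_vec; case: ifP => // _; exact: hs. Qed.

Lemma restrict_upd0 (C : {set 'I_n}) x : x \notin C -> x != i ->
  upd (restrict_vec s C i) x 0 = restrict_vec s C i.
Proof.
move=> xC xi; apply: functional_extensionality => k; rewrite /upd /restrict_vec.
case: eqP => // ->; by rewrite (negbTE xC) (negbTE xi).
Qed.

Lemma restrict_upd (C : {set 'I_n}) x :
  upd (restrict_vec s C i) x (0 + s x) = restrict_vec s (x |: C) i.
Proof.
apply: functional_extensionality => k; rewrite /upd /restrict_vec add0r in_setU1.
by case: eqP => [->|_] //=; rewrite eqxx.
Qed.

Lemma tele (d : R) (v : ('I_n -> R) -> R) : dSOS d v -> 0 <= d ->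
  forall B A : {set 'I_n}, [disjoint A & B] -> B \subset [set~ i] ->
  v (restrict_vec s (A :|: B) i) - v (restrict_vec s A i) <=
  d * (v (restrict_vec s B i) - v (restrict_vec s set0 i)).
Proof.
move=> hv hd B; have [m] := ubnP #|B|; elim: m B => // m IH B hB A dAB Bi.
have [->|[x xB]] := set_0Vmem B.
  by rewrite setU0 !subrr mulr0.
set B' := B :\ x.
have eB : B = x |: B' by rewrite setD1K.
have hB' : (#|B'| < m)%N by move: hB; rewrite (cardsD1 x B) xB.
have dAB' : [disjoint A & B'] by apply: disjointWr dAB; exact: subsetDl.
have B'i : B' \subset [set~ i] by apply: subset_trans Bi; exact: subsetDl.
have IH' := IH B' hB' A dAB' B'i.
have xA : x \notin A by apply: contraTN xB => xA; rewrite (disjointFr dAB).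
have xB' : x \notin B' by rewrite !inE eqxx.
have xi : x != i by have := subsetP Bi x xB; rewrite !inE.
have step : v (restrict_vec s (x |: (A :|: B')) i) - v (restrict_vec s (A :|: B') i) <=
    d * (v (restrict_vec s (x |: B') i) - v (restrict_vec s B' i)).
  have := hv x (restrict_vec s (A :|: B') i) (restrict_vec s B' i) 0 (s x)
    (restrict_nn _) (restrict_nn _) _ (lexx 0) (hs x).
  rewrite !restrict_upd !restrict_upd0 //; last by rewrite inE negb_or xA.
  apply => k _; rewrite /restrict_vec !inE.
  by case: (k == i); case: (k \in A); case: (k \in B); case: (k == x) => //=;
    rewrite ?orbT ?orbF /=; (exact: lexx || exact: hs).
clearbody B'; rewrite eB setUCA.
by have := lerD step IH'; rewrite -mulrDr !addrA !subrK.
Qed.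

End Aux.

Theorem mainTheorem2 (R : realFieldType) (n : nat) (d : R) (i : 'I_n)
  (v : ('I_n -> R) -> R)
  (hd : 1 <= d)
  (hv_nonneg : forall s, nonneg_vec s -> 0 <= v s)
  (hv : dSOS d v)
  (s : 'I_n -> R) (hs : nonneg_vec s) :
  (d + 1)^-1 * v s <=
  ((2 ^ n.-1)%:R)^-1 *
    \sum_(A : {set 'I_n} | A \subset [set~ i]) v (restrict_vec s A i).
Proof.
have d0 : 0 <= d by apply: le_trans hd.
pose h := fun A : {set 'I_n} => [set~ i] :\: A.
have hh (A : {set 'I_n}) : A \subset [set~ i] -> h (h A) = A.
  move=> Ai; apply/setP => k; move: (subsetP Ai k); rewrite /h !inE.
  by case: (k \in A); case: (k == i) => //= ->.
have hsub (A : {set 'I_n}) : h A \subset [set~ i] by exact: subsetDl.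
have full : restrict_vec s [set~ i] i = s.
  apply: functional_extensionality => k; rewrite /restrict_vec !inE.
  by case: eqP.
have key (A : {set 'I_n}) : A \subset [set~ i] ->
    v s <= v (restrict_vec s A i) + d * v (restrict_vec s (h A) i).
  move=> Ai.
  have dA : [disjoint A & h A].
    rewrite -setI_eq0; apply/eqP/setP => k; rewrite /h !inE.
    by case: (k \in A); rewrite ?andbF.
  have := @tele _ _ _ _ hs _ _ hv d0 _ _ dA (hsub A).
  have -> : A :|: h A = [set~ i].
    apply/setP => k; move: (subsetP Ai k); rewrite /h !inE.
    by case: (k \in A); case: (k == i) => //= ->.
  rewrite full => H.
  have h0 : 0 <= d * v (restrict_vec s set0 i) by apply: mulr_ge0 => //; apply: hv_nonneg; exact: restrict_nn.
  rewrite -lerBlDl; apply: (le_trans H); rewrite mulrBr lerBlDr lerDl //.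
have key2 (A : {set 'I_n}) : A \subset [set~ i] ->
    2 * v s <= (d + 1) * (v (restrict_vec s A i) + v (restrict_vec s (h A) i)).
  move=> Ai; have k1 := key A Ai; have k2 := key (h A) (hsub A).
  rewrite hh // in k2.
  have -> : (d + 1) * (v (restrict_vec s A i) + v (restrict_vec s (h A) i)) =
     (v (restrict_vec s A i) + d * v (restrict_vec s (h A) i)) +
     (v (restrict_vec s (h A) i) + d * v (restrict_vec s A i)) by ring.
  have -> : 2 * v s = v s + v s by ring.
  exact: lerD.
set S := \sum_(A : {set 'I_n} | A \subset [set~ i]) v (restrict_vec s A i).
have Sh : \sum_(A : {set 'I_n} | A \subset [set~ i]) v (restrict_vec s (h A) i) = S.
  rewrite /S (reindex_onto h h) //=; apply: eq_big => [A|A /andP[_ /eqP ->]] //.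
  rewrite hsub /=; apply/eqP/idP => [<-|Ai]; first exact: hsub.
  exact: hh.
have cnt : \sum_(A : {set 'I_n} | A \subset [set~ i]) (2 * v s) =
    (2 * v s) * (2 ^ n.-1)%:R.
  rewrite (eq_bigl (fun A => A \in powerset [set~ i])); last by move=> A; rewrite inE.
  by rewrite sumr_const card_powerset cardsC1 card_ord mulr_natr.
have tot : \sum_(A : {set 'I_n} | A \subset [set~ i]) (2 * v s) <=
    \sum_(A : {set 'I_n} | A \subset [set~ i])
      ((d + 1) * (v (restrict_vec s A i) + v (restrict_vec s (h A) i))).
  by apply: ler_sum => A Ai; exact: key2.
rewrite cnt -mulr_sumr big_split /= Sh in tot.
have Npos : 0 < ((2 ^ n.-1)%:R : R) by rewrite ltr0n expn_gt0.
have dpos : 0 < d + 1 by apply: ltr_wpDl.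
rewrite ler_pdivlMl // mulrCA ler_pdivrMl //.
rewrite -(@ler_pM2l _ 2) ?ltr0n //.
set N := ((2 ^ n.-1)%:R : R) in tot *.
have e1 : 2 * v s * N = 2 * (N * v s) by ring.
have e2 : (d + 1) * (S + S) = 2 * ((d + 1) * S) by ring.
by rewrite -e1 -e2.
Qed.
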